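(* Let $n,m,\delta$ be integers with $\delta \geq n$ and $\delta \geq (m+2)/2$. Then every hypergraph with $n$ vertices, $m$ edges and minimum degree at least $\delta$ is super-pancyclic.
   Context: A hypergraph $\mathcal{H}$ consists of a vertex set $V(\mathcal{H})$ and an edge set $E(\mathcal{H})$ of subsets of $V(\mathcal{H})$; the degree of a vertex is the number of edges containing it. A Berge cycle of length $\ell$ consists of $\ell$ distinct vertices $v_1,\dots,v_\ell$ (its base vertices) and $\ell$ distinct edges $e_1,\dots,e_\ell$ with $v_i,v_{i+1}\in e_i$ (indices mod $\ell$). $\mathcal{H}$ is super-pancyclic if for every $A \subseteq V(\mathcal{H})$ with $|A|\geq 3$, $\mathcal{H}$ has a Berge cycle whose set of base vertices is exactly $A$. *)

(* Defs.v *)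
From mathcomp Require Import all_boot.
Set Implicit Arguments. Unset Strict Implicit. Unset Printing Implicit Defensive.

Definition hdegree (V : finType) (E : {set {set V}}) (v : V) : nat :=
  #|[set e in E | v \in e]|.

Definition berge_cycle (V : finType) (E : {set {set V}}) (l : nat)
    (vs : 'I_l -> V) (es : 'I_l -> {set V}) : Prop :=
  injective vs /\ injective es /\
  (forall i, es i \in E) /\
  (forall i, vs i \in es i /\ vs (ordS i) \in es i).

Definition super_pancyclic (V : finType) (E : {set {set V}}) : Prop :=
  forall A : {set V}, 3 <= #|A| ->
    exists l (vs : 'I_l -> V) (es : 'I_l -> {set V}),
      berge_cycle E vs es /\ [set vs i | i : 'I_l] = A.

(* Main.v *)
Require Import Defs.
From mathcomp Require Import all_boot zify.
Set Implicit Arguments. Unset Strict Implicit. Unset Printing Implicit Defensive.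

Definition node (V : finType) := (V + {set V})%type.
Definition adj (V : finType) : rel (node V) := fun a b =>
  match a, b with
  | inl v, inr e => v \in e
  | inr e, inl v => v \in e
  | _, _ => false end.
Definition Vs (V : finType) (s : seq (node V)) : {set V} := [set v | inl v \in s].
Definition Es (V : finType) (s : seq (node V)) : {set {set V}} := [set e | inr e \in s].
Definition wf (V : finType) (E : {set {set V}}) (s : seq (node V)) :=
  [/\ cycle (@adj V) s, uniq s, s != [::] & Es s \subset E].

Lemma adj_sym V : symmetric (@adj V).
Proof. by case=> [a|a] [b|b]. Qed.

Lemma next_at_mid (T : eqType) (p1 p2 : seq T) y z :
  uniq (p1 ++ y :: z :: p2) -> next (p1 ++ y :: z :: p2) y = z.
Proof.
move=> U; rewrite next_nth mem_cat inE eqxx orbT.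
case: p1 U => [|a p1] U /=; first by rewrite eqxx.
have ya : (a == y) = false.
  move: U => /= /andP[H _]; apply: contraNF H => /eqP ->.
  by rewrite mem_cat inE eqxx orbT.
rewrite ya index_cat.
have -> : (y \in p1) = false.
  by move: U => /= /andP[_]; rewrite cat_uniq /= => /and3P[_ /norP[] /negbTE].
rewrite /= eqxx addn0 nth_cat ltnNge leqnSn /= subSn // subnn //.
Qed.

Lemma codeg (V : finType) (E : {set {set V}}) delta u w :
  #|E| + 2 <= 2*delta -> (forall v, delta <= hdegree E v) ->
  2 <= #|[set f in E | (u \in f) && (w \in f)]|.
Proof.
move=> hm hd; have hu := hd u; have hw := hd w; move: hu hw; rewrite /hdegree.
set Su := [set e in E | u \in e]; set Sw := [set e in E | w \in e].
have -> : [set f in E | (u \in f) && (w \in f)] = Su :&: Sw.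
  by apply/setP=> f; rewrite !inE; case: (f \in E).
have : #|Su :|: Sw| <= #|E|.
  by apply: subset_leq_card; apply/subsetP=> f; rewrite !inE => /orP[]/andP[].
have := cardsUI Su Sw; lia.
Qed.

Lemma two_pick (T : finType) (S : {set T}) f : 2 <= #|S| -> exists2 g, g \in S & g != f.
Proof.
move=> h; have : 0 < #|S :\ f| by move: h; rewrite (cardsD1 f S); case: (f \in S) => /=; lia.
by case/card_gt0P => g; rewrite !inE => /andP[]; exists g.
Qed.

Lemma disj_card (T : finType) (I : eqType) (r : seq I) (S : I -> {set T}) :
  uniq r -> {in r &, forall i j, i != j -> S i :&: S j = set0} ->
  #|\bigcup_(i <- r) S i| = \sum_(i <- r) #|S i|.
Proof.
elim: r => [|i r IH] /=; first by rewrite !big_nil cards0.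
move=> /andP[ir ur] hd; rewrite !big_cons.
have mem : forall z, z \in \bigcup_(j <- r) S j -> exists2 j, j \in r & z \in S j.
  move=> z; elim: (r) => [|k r' IH']; first by rewrite big_nil inE.
  rewrite big_cons inE => /orP[zk|/IH' [j jr zj]]; first by exists k; rewrite ?inE ?eqxx.
  by exists j; rewrite // inE jr orbT.
have dj : S i :&: \bigcup_(j <- r) S j = set0.
  apply/setP => z; rewrite inE in_set0; apply/negP => /andP[zi /mem [j jr zj]].
  have : i != j by apply: contraNneq ir => ->.
  move=> /(hd i j (mem_head _ _) (@mem_behead _ (i :: r) _ jr)) /setP /(_ z).
  by rewrite inE zi zj in_set0.
rewrite cardsU dj cards0 subn0 IH //.
by move=> a b ar br; apply: hd; rewrite inE ?ar ?br orbT.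
Qed.

Lemma rcons_head (T : Type) (t : seq T) a : rcons t a = head a t :: behead (rcons t a).
Proof. by case: t. Qed.

Lemma inlE (V : finType) (a b : V) : (inl a == inl b :> node V) = (a == b). Proof. by []. Qed.
Lemma inrE (V : finType) (a b : {set V}) : (inr a == inr b :> node V) = (a == b). Proof. by []. Qed.
Lemma inlrE (V : finType) (a : V) b : (inl a == inr b :> node V) = false. Proof. by []. Qed.
Lemma inrlE (V : finType) (a : V) b : (inr b == inl a :> node V) = false. Proof. by []. Qed.
Definition nodeE := (inlE, inrE, inlrE, inrlE).

Lemma next_at2 (T : eqType) (a : T) p1 y z p2 :
  uniq (a :: p1 ++ y :: z :: p2) -> next (a :: p1 ++ y :: z :: p2) y = z.
Proof. move=> u; exact: (@next_at_mid T (a :: p1) p2 y z u). Qed.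

Lemma sum8 (A1 A2 A3 A4 A5 A6 C1 C3 : nat) :
  A1 + (A2 + (C3 + (A3 + (A4 + (A5 + (C1 + A6)))))) =
  A1 + (A4 + (A5 + (C1 + (A6 + (A3 + (C3 + A2)))))).
Proof. lia. Qed.

Lemma arith (Y a W c m d : nat) :
  Y + a * (d - c) <= W -> d <= Y + a -> W + c <= m -> m + 2 <= 2*d -> c < d -> 0 < a -> False.
Proof.
move=> h1 h2 h3 h4 h5 h6.
have [t ht] : exists t, d - c = t.+1 by exists (d - c).-1; lia.
rewrite ht mulnS in h1.
have : t <= a * t by rewrite leq_pmull.
lia.
Qed.

Lemma deg_split2 (V : finType) (E CE : {set {set V}}) v :
  hdegree E v <= #|[set f in E :\: CE | v \in f]| + #|[set e in CE | v \in e]|.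
Proof.
rewrite /hdegree.
have : [set e in E | v \in e] \subset [set f in E :\: CE | v \in f] :|: [set e in CE | v \in e].
  by apply/subsetP => f; rewrite !inE; case: (f \in CE); case: (f \in E); case: (v \in f).
move/subset_leq_card; rewrite cardsU; lia.
Qed.

Lemma extend (V : finType) (E : {set {set V}}) delta s x :
  #|E| + 2 <= 2*delta -> (forall v, delta <= hdegree E v) ->
  wf E s -> x \notin Vs s -> #|Vs s| < delta ->
  exists s', wf E s' /\ Vs s' = x |: Vs s.
Proof.
move=> hm hd [cyc un ne sub] xn hc.
pose sv e := if next s (inr e) is inl w then w else x.
have svE : forall e, inr e \in s -> next s (inr e) = inl (sv e) /\ sv e \in e.
  move=> e es; have := next_cycle cyc es; rewrite /sv.
  by case: (next s (inr e)).
have CEc : #|Es s| <= #|Vs s|.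
  rewrite -(@card_in_imset _ _ sv).
    apply: subset_leq_card; apply/subsetP => w /imsetP [e]; rewrite !inE => es ->.
    by have [<- _] := svE e es; rewrite mem_next.
  move=> e1 e2; rewrite !inE => e1s e2s eq.
  have [h1 _] := svE e1 e1s; have [h2 _] := svE e2 e2s.
  have : next s (inr e1) = next s (inr e2) by rewrite h1 h2 eq.
  by move/(congr1 (prev s)); rewrite !(prev_next un) => -[].
have inrot : forall i z, z \in rot i s = (z \in s) by move=> i z; rewrite mem_rot.
case: (set_0Vmem [set e in Es s | x \in e]) => [X0 | [e0 Xe0]].
- have noX : forall f : {set V}, x \in f -> (@inr V {set V} f : node V) \in s = false.
    move=> f xf; apply/negP => fs.
    have : f \in [set e in Es s | x \in e] by rewrite !inE fs xf.
    by rewrite X0 inE.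
  have [v vs] : exists v, inl v \in s.
    have [z zs] : exists z, z \in s by case: (s) ne => // a t _; exists a; rewrite mem_head.
    case: z zs => [v|e] zs; first by exists v.
    by have [h _] := svE e zs; exists (sv e); rewrite -h mem_next.
  case: (rot_to vs) => i s1 Hr.
  have cyc1 : cycle (@adj V) (inl v :: s1) by rewrite -Hr rot_cycle.
  have un1 : uniq (inl v :: s1) by rewrite -Hr rot_uniq.
  have ins1 : forall z, z \in s1 -> z \in s.
    by move=> z zs; rewrite -(inrot i) Hr inE zs orbT.
  case: s1 Hr cyc1 un1 ins1 => [|[v'|e] t] Hr cyc1 un1 ins1.
  + by move: cyc1; rewrite /= /adj.
  + by move: cyc1; rewrite /= /adj.
  move: cyc1; rewrite /= => /andP[ve pt].
  move: pt; rewrite (rcons_head t (inl v)) /=.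
  case Hy: (head (inl v) t) => [w|e'] //= /andP[we pt].
  have [f] := two_pick set0 (codeg x v hm hd); rewrite inE => /and3P[fE xf vf] _.
  have [g] := two_pick f (codeg x w hm hd); rewrite inE => /and3P[gE xg wg] gf.
  have ft := noX f xf; have gt := noX g xg.
  have xs : (inl x \in s) = false by apply/negbTE; move: xn; rewrite inE.
  exists [:: inl v, inr f, inl x, inr g & t]; split; last first.
    apply/setP => z; rewrite !inE -(inrot i) Hr !inE !nodeE /=.
    by case: (z == v); case: (z == x).
  split.
  + rewrite /= vf xf xg /= (rcons_head t (inl v)) Hy /= wg. exact: pt.
  + move: un1 => /= /andP[]; rewrite !inE !nodeE /= => vt /andP[_ ut].
    have nt : forall z, z \in s = false -> z \in t = false.
      by move=> z zs; apply/negbTE; apply: contraFN zs => zt; apply: ins1; rewrite inE zt orbT.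
    rewrite (nt _ ft) (nt _ gt) (nt _ xs) (negbTE vt) ut (eq_sym f g) (negbTE gf) /= !orbF !andbT.
    by apply/negP => /eqP vx; move: xs; rewrite -vx vs.
  + by [].
  + apply/subsetP => z; rewrite !inE !nodeE /= => /or3P[/eqP->|/eqP->|zt] //.
    by apply: (subsetP sub); rewrite inE ins1 // inE zt orbT.
move: Xe0; rewrite inE => /andP[e0s xe0].
have xs : (inl x \in s) = false by apply/negbTE; move: xn; rewrite inE.
case: (boolP [exists f : {set V}, [exists e : {set V}, [&& f \in E, x \in f,
      (inr f : node V) \notin s & [&& e \in Es s, x \in e & sv e \in f]]]]).
  case/existsP => f /existsP [e] /and4P [fE xf fs /and3P [es xe wf]].
  move: es; rewrite inE => es.
  have [nx _] := svE e es.
  case: (rot_to es) => i t Hr.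
  have cyc1 : cycle (@adj V) (inr e :: t) by rewrite -Hr rot_cycle.
  have un1 : uniq (inr e :: t) by rewrite -Hr rot_uniq.
  have ins1 : forall z, z \in t -> z \in s.
    by move=> z zs; rewrite -(inrot i) Hr inE zs orbT.
  move: nx; rewrite -(next_rot i un) Hr next_nth mem_head /= eqxx.
  case: t Hr cyc1 un1 ins1 => [|a t'] Hr cyc1 un1 ins1 //= Ha.
  subst a.
  move: cyc1 => /= /andP[_ pt].
  have ef : (e == f) = false.
    by apply/negbTE; apply: contraNneq fs => <-.
  have wx : (sv e == x) = false.
    apply/negbTE; apply: contraFneq xs => <-; apply: ins1; exact: mem_head.
  exists [:: inr e, inl x, inr f, inl (sv e) & t']; split; last first.
    apply/setP => z; rewrite !inE -(inrot i) Hr !inE !nodeE /=.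
    by case: (z == x); case: (z == sv e).
  split.
  + by rewrite /= xe xf wf.
  + move: un1 => /= /andP[]; rewrite !inE !nodeE /= => et /andP[wt ut].
    have nt : forall z, z \in s = false -> z \in t' = false.
      by move=> z zs; apply/negbTE; apply: contraFN zs => zt; apply: ins1; rewrite inE zt orbT.
    rewrite (nt _ xs) (nt _ (negbTE fs)) (negbTE et) wt ut ef (eq_sym x) wx /=.
    by [].
  + by [].
  + apply/subsetP => z; rewrite !inE !nodeE /= => /or3P[/eqP->|/eqP->|zt] //.
      by apply: (subsetP sub); rewrite inE.
    by apply: (subsetP sub); rewrite inE ins1 // inE zt orbT.
move=> NI.
case: (boolP [exists e1 : {set V}, [exists e2 : {set V}, [exists h : {set V},
   [&& [&& e1 \in Es s, x \in e1, e2 \in Es s & x \in e2], e1 != e2, h \in E,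
       (inr h : node V) \notin s & (sv e1 \in h) && (sv e2 \in h)]]]]).
  case/existsP => e1 /existsP [e2] /existsP [h] /and5P [/and4P [e1s xe1 e2s xe2] ne12 hE hs /andP [h1 h2]].
  move: e1s e2s; rewrite !inE => e1s e2s.
  have [n1 _] := svE e1 e1s; have [n2 _] := svE e2 e2s.
  have us : (inl (sv e1) : node V) \in s by rewrite -n1 mem_next.
  case: (rot_to us) => i r Hr.
  have cyc1 : cycle (@adj V) (inl (sv e1) :: r) by rewrite -Hr rot_cycle.
  have un1 : uniq (inl (sv e1) :: r) by rewrite -Hr rot_uniq.
  have n1' : next (inl (sv e1) :: r) (inr e1) = inl (sv e1) by rewrite -Hr (next_rot i un).
  have n2' : next (inl (sv e1) :: r) (inr e2) = inl (sv e2) by rewrite -Hr (next_rot i un).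
  have e1r : (inr e1 : node V) \in r by move: e1s; rewrite -(inrot i) Hr inE nodeE.
  have e2r : (inr e2 : node V) \in r by move: e2s; rewrite -(inrot i) Hr inE nodeE.
  move: Hr cyc1 un1 n1' n2' e2r; case/splitPr: e1r => r1 r2.
  case: r2 => [|z r2] Hr cyc1 un1 n1' n2' e2r; last first.
    have := next_at2 un1.
    rewrite n1' => zu; subst z.
    by move: un1 => /= /andP[]; rewrite mem_cat !inE eqxx !orbT.
  have e2r1 : (inr e2 : node V) \in r1.
    by move: e2r; rewrite mem_cat !inE nodeE eq_sym (negbTE ne12) orbF.
  move: Hr cyc1 un1 n1' n2'; case/splitPr: e2r1 => q1 q2.
  rewrite -catA cat_cons.
  case: q2 => [|b q3] Hr cyc1 un1 n1' n2'.
    by have := next_at2 un1; rewrite n2'.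
  have := next_at2 un1.
  rewrite n2' => bw; subst b.
  move: (sv e1) (sv e2) h1 h2 Hr cyc1 un1 => w1 w2 h1 h2 Hr cyc1 un1.
  pose s2 := [:: inl x, inr e1 & rev q3 ++ [:: inl w2, inr h, inl w1 & q1 ++ [:: inr e2]]].
  have P : perm_eq s2 [:: inl x, inr h & rot i s].
    rewrite Hr; apply/permP => p; rewrite /s2 /= !count_cat /= count_rev /= !count_cat /=.
    set A1 := p (inl x); set A2 := p (inr e1); set A3 := p (inl w2); set A4 := p (inr h).
    set A5 := p (inl w1); set A6 := p (inr e2); set C1 := count p q1; set C3 := count p q3.
    clearbody A1 A2 A3 A4 A5 A6 C1 C3; rewrite !addn0.
    by apply: sum8.
  have mP := perm_mem P.
  exists s2; split; last first.
    apply/setP => z; rewrite in_set mP !inE inrot !nodeE /=.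
    by case: (z == x).
  split.
  + move: cyc1; rewrite /s2 /= !rcons_cat !cat_path /=.
    move=> /and4P [P1 P2 _ P3]; rewrite xe1 h2 h1 /=.
    have R : path (@adj V) (inr e1) (rcons (rev q3) (inl w2)).
      have := rev_path (@adj V) (inl w2) (rcons q3 (inr e1)).
      rewrite last_rcons belast_rcons rev_cons => ->.
      rewrite (@eq_path _ _ (@adj V)); last by move=> a b; exact: adj_sym.
      by move: P3; rewrite rcons_path cats1; case/andP.
    rewrite rcons_path in R; case/andP: R => R1 R2; rewrite R1 R2 /=.
    by rewrite rcons_cat /= cat_path P1 /= P2 xe2.
  + rewrite (perm_uniq P) /= !inE !inrot nodeE xs (negbTE hs) rot_uniq un.
    by [].
  + by [].
  + apply/subsetP => z; rewrite in_set mP !inE inrot !nodeE /= => /orP[/eqP->|zs] //.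
    by apply: (subsetP sub); rewrite inE.
move=> NR; exfalso.
have NI' : forall f e, f \in E -> x \in f -> (inr f : node V) \notin s -> e \in Es s ->
    x \in e -> sv e \in f -> False.
  move=> f e fE xf fs es xe svf; move/negP: NI; apply; apply/existsP; exists f.
  by apply/existsP; exists e; rewrite fE xf fs es xe svf.
have NR' : forall e1 e2 h, e1 \in Es s -> x \in e1 -> e2 \in Es s -> x \in e2 -> e1 != e2 ->
    h \in E -> (inr h : node V) \notin s -> sv e1 \in h -> sv e2 \in h -> False.
  move=> e1 e2 h e1s xe1 e2s xe2 ne0 hE hs h1 h2; move/negP: NR; apply; apply/existsP; exists e1.
  by apply/existsP; exists e2; apply/existsP; exists h; rewrite e1s xe1 e2s xe2 ne0 hE hs h1 h2.
pose X := [set e in Es s | x \in e].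
pose W := E :\: Es s.
pose S (o : option {set V}) := if o is Some e then [set f in W | sv e \in f] else [set f in W | x \in f].
pose r := None :: map Some (enum X).
have U : #|\bigcup_(i <- r) S i| = \sum_(i <- r) #|S i|.
  apply: disj_card.
    rewrite /r /= map_inj_uniq ?enum_uniq; last by move=> a b [].
    by rewrite andbT; apply/negP => /mapP [? _].
  have inX : forall e, Some e \in r -> e \in X.
    by move=> e; rewrite /r inE /= => /mapP [e' he' [->]]; rewrite -mem_enum.
  move=> [e1|] [e2|] i1 i2 ij; apply/setP => f; rewrite !inE; apply/negP.
  + have := inX e1 i1; have := inX e2 i2; rewrite !inE => /andP[e2s xe2] /andP[e1s xe1].
    case/and3P => /andP[/andP[fs fE] h1] _ h2.
    have ne12 : e1 != e2 by apply/eqP => eq12; move: ij; rewrite eq12 eqxx.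
    by apply: (NR' e1 e2 f); rewrite ?inE.
  + have := inX e1 i1; rewrite !inE => /andP[e1s xe1].
    case/and3P => /andP[/andP[fs fE] h1] _ h2.
    by apply: (NI' f e1); rewrite ?inE.
  + have := inX e2 i2; rewrite !inE => /andP[e2s xe2].
    case/and3P => /andP[/andP[fs fE] h1] _ h2.
    by apply: (NI' f e2); rewrite ?inE.
  + by move: ij; rewrite eqxx.
have subW : \bigcup_(i <- r) S i \subset W.
  elim: (r) => [|i r' IH]; first by rewrite big_nil sub0set.
  rewrite big_cons subUset IH andbT.
  by case: i => [e|]; apply/subsetP => f; rewrite inE => /andP[].
have := subset_leq_card subW; rewrite U /r big_cons big_map big_enum /=.
move=> hsum.
have hY := deg_split2 E (Es s) x; have := hd x => hx.
have hZ : \sum_(e in X) (delta - #|Es s|) <= \sum_(e in X) #|[set f in W | sv e \in f]|.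
  apply: leq_sum => e _.
  have := deg_split2 E (Es s) (sv e); have := hd (sv e).
  have : #|[set e0 in Es s | sv e \in e0]| <= #|Es s|.
    by apply: subset_leq_card; apply/subsetP => f; rewrite inE => /andP[].
  move=> h1 h2 h3; rewrite leq_subLR; apply: (leq_trans h2); apply: (leq_trans h3).
  by rewrite addnC leq_add2r.
rewrite sum_nat_const in hZ.
have hW : #|W| + #|Es s| <= #|E|.
  by rewrite /W cardsD (setIidPr sub) subnK // subset_leq_card.
have Xp : 0 < #|X| by apply/card_gt0P; exists e0; rewrite inE e0s xe0.
apply: (arith (Y := #|[set f in W | x \in f]|) (a := #|X|) (W := #|W|) (c := #|Es s|) (m := #|E|) (d := delta)).
- exact: leq_trans (leq_add (leqnn _) hZ) hsum.
- exact: leq_trans hx hY.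
- exact: hW.
- exact: hm.
- exact: leq_ltn_trans CEc hc.
- exact: Xp.
Qed.

Lemma grow (V : finType) (E : {set {set V}}) delta (A : {set V}) :
  #|E| + 2 <= 2*delta -> (forall v, delta <= hdegree E v) -> #|A| <= delta ->
  forall k, 0 < k -> k <= #|A| -> exists s, [/\ wf E s, Vs s \subset A & #|Vs s| = k].
Proof.
move=> hm hd hA; elim=> [//|k IH] _ hk.
case: k IH hk => [|k] IH hk.
  have [v vA] : exists v, v \in A by apply/card_gt0P.
  have : 0 < hdegree E v by apply: leq_trans (hd v); lia.
  rewrite /hdegree => /card_gt0P [e]; rewrite inE => /andP[eE ve].
  exists [:: inl v; inr e].
  have VsE : Vs [:: inl v; inr e] = [set v].
    by apply/setP => z; rewrite !inE !nodeE orbF.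
  rewrite VsE cards1 sub1set vA; split => //; split => //=.
  - by rewrite ve.
  - by apply/subsetP => f; rewrite !inE !nodeE /= => /eqP->.
have [s [ws sA cs]] := IH isT (ltnW hk).
have : ~~ (A \subset Vs s).
  by apply/negP => /subset_leq_card; rewrite cs; lia.
case/subsetPn => x xA xs.
have hlt : #|Vs s| < delta by rewrite cs; lia.
have [s' [ws' Vs']] := extend hm hd ws xs hlt.
exists s'; split => //; first by rewrite Vs' subUset sub1set xA sA.
by rewrite Vs' cardsU1 xs cs.
Qed.

Definition isr (V : finType) (z : node V) := if z is inr _ then true else false.

Lemma adj_isr (V : finType) (a b : node V) : adj a b -> isr b = ~~ isr a.
Proof. by case: a; case: b. Qed.

Lemma to_berge (V : finType) (E : {set {set V}}) s : wf E s ->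
  exists l (vs : 'I_l -> V) (es : 'I_l -> {set V}),
    berge_cycle E vs es /\ [set vs i | i : 'I_l] = Vs s.
Proof.
move=> [cyc un ne sub].
have [v vs] : exists v, inl v \in s.
  have [z zs] : exists z, z \in s by case: (s) ne => // a t _; exists a; rewrite mem_head.
  case: z zs => [v|e] zs; first by exists v.
  have := next_cycle cyc zs; case Hn: (next s (inr e)) => [w|] // _.
  by exists w; rewrite -Hn mem_next.
case: (rot_to vs) => i0 t Hr.
have inp : forall z, (z \in inl v :: t) = (z \in s) by move=> z; rewrite -Hr mem_rot.
have cyc1 : cycle (@adj V) (inl v :: t) by rewrite -Hr rot_cycle.
have un1 : uniq (inl v :: t) by rewrite -Hr rot_uniq.
set p := inl v :: t in inp cyc1 un1.
set d : node V := inl v.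
set N := size p.
have Npos : 0 < N by [].
have nb : forall k, k < N -> adj (nth d p k) (nth d p (k.+1 %% N)).
  move=> k kN; move: cyc1; rewrite /p /= => /(pathP d) /(_ k).
  rewrite size_rcons => /(_ kN).
  rewrite nth_rcons.
  have -> : nth d (inl v :: rcons t (inl v)) k = nth d p k.
    by rewrite /p; case: k kN => //= k kN; rewrite nth_rcons (_ : k < size t).
  case: (ltnP k (size t)) => lt.
    by rewrite modn_small // /N /p /= ltnS.
  have eq : k = size t by apply/eqP; rewrite eqn_leq lt andbT -ltnS; exact: kN.
  by rewrite eq eqxx modnn.
have par : forall k, k < N -> isr (nth d p k) = odd k.
  elim=> [|k IH] kN; first by [].
  have := nb k (ltnW kN); rewrite modn_small // => /adj_isr ->.
  by rewrite IH ?(ltnW kN).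
have Neven : ~~ odd N.
  have hlt : N.-1 < N by rewrite ltn_predL.
  have h := nb N.-1 hlt.
  rewrite prednK // modnn in h.
  move/adj_isr: h => /= /esym /negbFE.
  rewrite par ?prednK // => h.
  by rewrite h.
pose l := N./2.
have Nl : N = 2 * l.
  by have := odd_double_half N; rewrite (negbTE Neven) add0n mul2n => ->.
pose vsf (i : 'I_l) := if nth d p (2 * i) is inl w then w else v.
pose es (i : 'I_l) := if nth d p (2 * i).+1 is inr e then e else set0.
have lt2 : forall i : 'I_l, 2 * i < N /\ (2 * i).+1 < N.
  by move=> i; have := ltn_ord i; rewrite Nl; lia.
have vsE : forall i : 'I_l, nth d p (2 * i) = inl (vsf i).
  move=> i; have := par _ (lt2 i).1; rewrite oddM /= /vsf.
  by case: (nth d p (2 * i)).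
have esE : forall i : 'I_l, nth d p (2 * i).+1 = inr (es i).
  move=> i; have := par _ (lt2 i).2; rewrite /es.
  by case: (nth d p (2 * i).+1) => // a; rewrite /= oddM.
exists l, vsf, es; split.
  split; [|split; [|split]].
  - move=> i j h; have : nth d p (2 * i) = nth d p (2 * j) by rewrite !vsE h.
    move/eqP; rewrite (nth_uniq d (lt2 i).1 (lt2 j).1 un1) => /eqP h2.
    by apply/val_inj => /=; lia.
  - move=> i j h; have : nth d p (2 * i).+1 = nth d p (2 * j).+1 by rewrite !esE h.
    move/eqP; rewrite (nth_uniq d (lt2 i).2 (lt2 j).2 un1) => /eqP h2.
    by apply/val_inj => /=; lia.
  - by move=> i; apply: (subsetP sub); rewrite inE -inp -esE mem_nth // (lt2 i).2.
  - move=> i; split.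
      by have := nb _ (lt2 i).1; rewrite vsE modn_small ?(lt2 i).2 // esE.
    have := nb _ (lt2 i).2; rewrite esE.
    have -> : (2 * i).+2 %% N = 2 * ordS i.
      by rewrite /= Nl muln_modr mulnSr addn2.
    by rewrite vsE.
apply/setP => z; rewrite inE; apply/imsetP/idP.
  by case => i _ ->; rewrite -inp -vsE mem_nth // (lt2 i).1.
move=> zs; rewrite -inp in zs.
pose k := index (inl z) p.
have kN : k < N by rewrite index_mem.
have nk : nth d p k = inl z := nth_index d zs.
have := par k kN; rewrite nk /= => ok.
have k2 : k = 2 * k./2.
  by have := odd_double_half k; rewrite -ok add0n mul2n.
have kl : k./2 < l by move: kN; rewrite Nl {1}k2; lia.
exists (Ordinal kl) => //.
by rewrite /vsf /= -k2 nk.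
Qed.

Theorem theorem7 (n m delta : nat) (V : finType) (E : {set {set V}}) :
  n <= delta -> m + 2 <= 2 * delta ->
  #|V| = n -> #|E| = m ->
  (forall v : V, delta <= hdegree E v) ->
  super_pancyclic E.
Proof.
move=> hn hm hV hE hd A hA.
have hm' : #|E| + 2 <= 2 * delta by rewrite hE.
have hAd : #|A| <= delta by apply: leq_trans (max_card _) _; rewrite hV.
have A0 : 0 < #|A| by lia.
have [s [ws sA cs]] := grow hm' hd hAd A0 (leqnn _).
have eqA : Vs s = A by apply/eqP; rewrite eqEcard sA cs leqnn.
have [l [vs [es [bc img]]]] := to_berge ws.
by exists l, vs, es; rewrite img eqA.
Qed.
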